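(* Let $\mathfrak g$ be a complex semisimple Lie algebra, $\mathfrak h \subset \mathfrak g$ a Cartan subalgebra, and $\rho : \mathfrak g \to \mathrm{End}(W)$ a finite-dimensional representation. Then $W \otimes \mathfrak g$ is generated, as a $\mathfrak g$-module, by $W \otimes \mathfrak h$.
   Context: $W \otimes \mathfrak g$ is a $\mathfrak g$-module via $(\rho\otimes \mathrm{ad})(\xi)(w\otimes \eta) = \rho(\xi)w \otimes \eta + w \otimes [\xi,\eta]$. *)

(* Defs.v *)
From HB Require Import structures.
From mathcomp Require Import all_boot all_order all_algebra.
From mathcomp Require Import complex.
From mathcomp Require Import reals.
Set Implicit Arguments. Unset Strict Implicit. Unset Printing Implicit Defensive.
Import Order.TTheory GRing.Theory Num.Theory.
Local Open Scope ring_scope.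


Section Lie.
Variables (F : fieldType) (g : vectType F) (br : g -> g -> g).

Definition lie_bracket : Prop :=
  [/\ forall a x y z, br (a *: x + y) z = a *: br x z + br y z,
      forall a x y z, br z (a *: x + y) = a *: br z x + br z y,
      forall x, br x x = 0 &
      forall x y z, br x (br y z) + br y (br z x) + br z (br x y) = 0].

(* [U, V] : the subspace spanned by all brackets [u, v], u in U, v in V
   (by bilinearity, spanned by brackets of basis vectors) *)
Definition brsp (U V : {vspace g}) : {vspace g} :=
  (<<[seq br u v | u <- vbasis U, v <- vbasis V]>>)%VS.

Definition lie_subalgebra (h : {vspace g}) : Prop :=
  forall x y, x \in h -> y \in h -> br x y \in h.

Definition lie_ideal (I : {vspace g}) : Prop :=
  forall x y, y \in I -> br x y \in I.

Definition derived_series (I : {vspace g}) (n : nat) : {vspace g} :=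
  iter n (fun J => brsp J J) I.

Definition lie_solvable (I : {vspace g}) : Prop :=
  exists n, derived_series I n = 0%VS.

Definition lower_central_series (h : {vspace g}) (n : nat) : {vspace g} :=
  iter n (fun J => brsp h J) h.

Definition lie_nilpotent (h : {vspace g}) : Prop :=
  exists n, lower_central_series h n = 0%VS.

Definition lie_semisimple : Prop :=
  forall I, lie_ideal I -> lie_solvable I -> I = 0%VS.

Definition cartan_subalgebra (h : {vspace g}) : Prop :=
  [/\ lie_subalgebra h, lie_nilpotent h &
      forall x, (forall y, y \in h -> br x y \in h) -> x \in h].

Definition lie_rep (W : vectType F) (rho : g -> 'End(W)) : Prop :=
  (forall a x y, rho (a *: x + y) = a *: rho x + rho y) /\
  (forall x y, rho (br x y) = (rho x \o rho y - rho y \o rho x)%VF).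

(* The tensor product W (x) g, realized as matrices of coordinates with
   respect to the fixed bases vbasis {:W}%VS and vbasis {:g}%VS;
   tens w x is the pure tensor w (x) x. *)
Definition tensWg (W : vectType F) := 'M[F]_(\dim {:W}%VS, \dim {:g}%VS).

Definition tens (W : vectType F) (w : W) (x : g) : tensWg W :=
  \matrix_(i, j) (coord (vbasis {:W}%VS) i w * coord (vbasis {:g}%VS) j x).

(* (rho (x) ad)(xi), the unique linear map on W (x) g with
   w (x) eta |-> rho(xi) w (x) eta + w (x) [xi, eta],
   defined by linear extension from the basis tensors. *)
Definition tens_act (W : vectType F) (rho : g -> 'End(W)) (xi : g)
    (M : tensWg W) : tensWg W :=
  \sum_(i < \dim {:W}%VS) \sum_(j < \dim {:g}%VS)
     M i j *: (tens (rho xi (tnth (vbasis {:W}%VS) i)) (tnth (vbasis {:g}%VS) j)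
               + tens (tnth (vbasis {:W}%VS) i) (br xi (tnth (vbasis {:g}%VS) j))).

End Lie.

Definition generates_module (F : fieldType) (g M : vectType F)
    (act : g -> M -> M) (S : M -> Prop) : Prop :=
  forall U : {vspace M},
    (forall m, S m -> m \in U) ->
    (forall xi m, m \in U -> act xi m \in U) ->
    U = fullv.

(* Main.v *)
Require Import Defs.
From HB Require Import structures.
From mathcomp Require Import all_boot all_order all_algebra.
From mathcomp Require Import complex.
From mathcomp Require Import reals.
From mathcomp Require Import zify.
Set Implicit Arguments. Unset Strict Implicit. Unset Printing Implicit Defensive.
Import Order.TTheory GRing.Theory Num.Theory.
Local Open Scope ring_scope.


Section Basic.
Variables (F : fieldType) (g : vectType F) (br : g -> g -> g).
Hypothesis Hbr : lie_bracket br.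

Lemma brDl x y z : br (x + y) z = br x z + br y z.
Proof. have [H _ _ _] := Hbr. by have := H 1 x y z; rewrite !scale1r. Qed.
Lemma brDr x y z : br z (x + y) = br z x + br z y.
Proof. have [_ H _ _] := Hbr. by have := H 1 x y z; rewrite !scale1r. Qed.
Lemma br0l z : br 0 z = 0.
Proof. have h := brDl 0 0 z; rewrite addr0 in h; apply: (addrI (br 0 z)). by rewrite -h addr0. Qed.
Lemma br0r z : br z 0 = 0.
Proof. have h := brDr 0 0 z; rewrite addr0 in h; apply: (addrI (br z 0)). by rewrite -h addr0. Qed.
Lemma brZl a x z : br (a *: x) z = a *: br x z.
Proof. have [H _ _ _] := Hbr. by have := H a x 0 z; rewrite !addr0 br0l addr0. Qed.
Lemma brZr a x z : br z (a *: x) = a *: br z x.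
Proof. have [_ H _ _] := Hbr. by have := H a x 0 z; rewrite !addr0 br0r addr0. Qed.
Lemma brNl x z : br (- x) z = - br x z.
Proof. by rewrite -scaleN1r brZl scaleN1r. Qed.
Lemma brNr x z : br z (- x) = - br z x.
Proof. by rewrite -scaleN1r brZr scaleN1r. Qed.
Lemma brBl x y z : br (x - y) z = br x z - br y z.
Proof. by rewrite brDl brNl. Qed.
Lemma brBr x y z : br z (x - y) = br z x - br z y.
Proof. by rewrite brDr brNr. Qed.
Lemma brC x y : br x y = - br y x.
Proof.
have [_ _ H _] := Hbr; have := H (x + y).
rewrite brDl !brDr !H add0r addr0 => /eqP; rewrite addr_eq0 => /eqP //.
Qed.
Lemma brJ x y z : br x (br y z) = br (br x y) z + br y (br x z).
Proof.
have [_ _ _ H] := Hbr; have := H x y z.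
rewrite (brC z (br x y)) (brC z x) brNr => /eqP.
by rewrite -addrA -opprD subr_eq0 => /eqP ->; rewrite addrC.
Qed.
Lemma brsumL I (r : seq I) (P : pred I) (f : I -> g) z :
  br (\sum_(i <- r | P i) f i) z = \sum_(i <- r | P i) br (f i) z.
Proof. exact: (big_morph (fun x => br x z) (fun x y => brDl x y z) (br0l z)). Qed.
Lemma brsumR I (r : seq I) (P : pred I) (f : I -> g) z :
  br z (\sum_(i <- r | P i) f i) = \sum_(i <- r | P i) br z (f i).
Proof. exact: (big_morph (fun x => br z x) (fun x y => brDr x y z) (br0r z)). Qed.

Definition adf (x : g) : g -> g := br x.
Lemma adf_lin x : linear (adf x).
Proof. by move=> a u v; rewrite /adf brDr brZr. Qed.
HB.instance Definition _ x := GRing.isLinear.Build F g g *:%R (adf x) (adf_lin x).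
Definition adl (x : g) : 'End(g) := linfun (adf x).
Lemma adlE x v : adl x v = br x v.
Proof. by rewrite /adl lfunE. Qed.

Lemma iter_add x n u v : iter n (br x) (u + v) = iter n (br x) u + iter n (br x) v.
Proof. by elim: n => //= n ->; rewrite brDr. Qed.
Lemma iter_0 x n : iter n (br x) 0 = 0.
Proof. by elim: n => //= n ->; rewrite br0r. Qed.
Lemma iter_opp x n u : iter n (br x) (- u) = - iter n (br x) u.
Proof. by elim: n => //= n ->; rewrite brNr. Qed.

End Basic.


Section Lcs.
Variables (F : fieldType) (g : vectType F) (br : g -> g -> g).
Hypothesis Hbr : lie_bracket br.

Lemma br_brsp (U V : {vspace g}) u v : u \in U -> v \in V -> br u v \in brsp br U V.
Proof.
move=> uU vV; rewrite (coord_vbasis uU) (coord_vbasis vV) (brsumL Hbr).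
apply: memv_suml => i _; rewrite (brZl Hbr) (brsumR Hbr); apply: memvZ.
apply: memv_suml => j _; rewrite (brZr Hbr); apply: memvZ; apply: memv_span.
by apply: allpairs_f; apply: mem_nth; rewrite size_tuple.
Qed.

Lemma brsp_sub (U V W : {vspace g}) : (forall u v, u \in U -> v \in V -> br u v \in W) ->
  (brsp br U V <= W)%VS.
Proof.
move=> H; apply/span_subvP => x /allpairsP [[u v] [/= uU vV ->]].
by apply: H; apply: vbasis_mem.
Qed.

Variable h : {vspace g}.
Hypothesis Hsub : lie_subalgebra br h.
Local Notation lcs := (lower_central_series br h).

Lemma lcs_sub n : (lcs n <= h)%VS.
Proof.
elim: n => [|n IH] /=; first exact: subvv.
apply: brsp_sub => u v uh vl; apply: Hsub => //; exact: (subvP IH).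
Qed.

Lemma lcs_dec n : (lcs n.+1 <= lcs n)%VS.
Proof.
elim: n => [|n IH]; first exact: (lcs_sub 1).
apply: brsp_sub => u v uh vl; apply: br_brsp => //; exact: (subvP IH).
Qed.

Lemma lcs_iter x y n k : x \in h -> y \in lcs n -> iter k (br x) y \in lcs (k + n)%N.
Proof.
move=> xh yl; elim: k => [|k IH] //=; exact: br_brsp.
Qed.

Hypothesis Hnil : lie_nilpotent br h.

Lemma nil_iter : exists m, forall x y, x \in h -> y \in h -> iter m (br x) y = 0.
Proof.
have [m Hm] := Hnil; exists m => x y xh yh.
by have := lcs_iter m xh (yh : y \in lcs 0); rewrite addn0 Hm memv0 => /eqP.
Qed.

Lemma br_deriv x : forall n a k y z, (a + k)%N = n -> iter k (br x) y = 0 ->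
  iter a (br x) z = 0 -> iter (a + k)%N (br x) (br y z) = 0.
Proof.
elim=> [|n IH] a k y z.
  move=> /eqP; rewrite addn_eq0 => /andP [/eqP -> /eqP ->] /= -> _.
  by rewrite (br0l Hbr).
case: a => [|a]; first by move=> _ _ Hz; rewrite /= in Hz; rewrite Hz (br0r Hbr) (iter_0 Hbr).
case: k => [|k]; first by move=> _ Hy _; rewrite /= in Hy; rewrite Hy (br0l Hbr) (iter_0 Hbr).
move=> Hn Hy Hz; rewrite addSn iterSr (brJ Hbr) (iter_add Hbr).
have H1 : iter (a.+1 + k)%N (br x) (br (br x y) z) = 0.
  apply: IH => //; first by move: Hn; rewrite addSn addnS => -[].
  by rewrite -iterSr.
have H2 : iter (a + k.+1)%N (br x) (br y (br x z)) = 0.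
  apply: IH => //; first by move: Hn; rewrite addSn => -[].
  by rewrite -iterSr.
by rewrite addSnnS in H1; rewrite H1 H2 addr0.
Qed.

End Lcs.


Section Stab.
Variables (F : fieldType) (g : vectType F).
Local Notation nn := (\dim (fullv : {vspace g})).+1.

Lemma forever (A : nat -> {vspace g}) :
  (forall k, A k = A k.+1 -> A k.+1 = A k.+2) ->
  forall k, A k = A k.+1 -> forall j, A k = A (k + j)%N.
Proof.
move=> Hs k Hk.
have H : forall j, A (k + j)%N = A (k + j).+1.
  by elim=> [|j IH]; rewrite ?addn0 // addnS; apply: Hs.
by elim=> [|j IH]; rewrite ?addn0 // IH addnS H.
Qed.

Lemma stab_dec (A : nat -> {vspace g}) : (forall k, (A k.+1 <= A k)%VS) ->
  (forall k, A k = A k.+1 -> A k.+1 = A k.+2) -> forall j, A nn = A (nn + j)%N.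
Proof.
move=> Hd Hs.
have H : forall k, (exists j, (j < k)%N /\ A j = A j.+1) \/ (\dim (A k) + k <= \dim (A 0%N))%N.
  elim=> [|k [IH|IH]]; first by right; rewrite addn0.
  - by left; case: IH => j [jk Hj]; exists j; split => //; apply: ltnW.
  case: (eqVneq (A k.+1) (A k)) => [E|NE]; first by left; exists k; split.
  right; apply: leq_trans IH; rewrite addnS -addSn leq_add2r.
  rewrite ltnNge; apply: contra NE => Hle.
  by rewrite eqEdim Hd Hle.
have [[k [kn Hk]]|Hc] := H nn; last first.
  have := dimvS (subvf (A 0%N)); move: Hc => Hc Hd0; exfalso; lia.
move=> j; have Hf := forever Hs Hk.
rewrite -(subnKC (ltnW kn)) -Hf -addnA -Hf //.
Qed.

Lemma stab_inc (A : nat -> {vspace g}) : (forall k, (A k <= A k.+1)%VS) ->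
  (forall k, A k = A k.+1 -> A k.+1 = A k.+2) -> forall j, A nn = A (nn + j)%N.
Proof.
move=> Hd Hs.
have H : forall k, (exists j, (j < k)%N /\ A j = A j.+1) \/ (k <= \dim (A k))%N.
  elim=> [|k [IH|IH]]; first by right.
  - by left; case: IH => j [jk Hj]; exists j; split => //; apply: ltnW.
  case: (eqVneq (A k) (A k.+1)) => [E|NE]; first by left; exists k; split.
  right; apply: leq_ltn_trans IH _.
  rewrite ltnNge; apply: contra NE => Hle.
  by rewrite eqEdim Hd Hle.
have [[k [kn Hk]]|Hc] := H nn; last first.
  have := dimvS (subvf (A nn)); move: Hc => Hc Hd0; exfalso; lia.
move=> j; have Hf := forever Hs Hk.
rewrite -(subnKC (ltnW kn)) -Hf -addnA -Hf //.
Qed.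

Lemma fitting (T : 'End(g)) (V : {vspace g}) : (T @: V <= V)%VS ->
  forall v, v \in V -> exists u, u \in V /\ iter nn T v = iter nn T (iter nn T u).
Proof.
move=> HV v vV.
pose A k := iter k (fun U => T @: U)%VS V.
have Hd : forall k, (A k.+1 <= A k)%VS.
  by elim=> [|k IH] //=; apply: limgS.
have Hs : forall k, A k = A k.+1 -> A k.+1 = A k.+2.
  by move=> k E; change ((T @: A k) = (T @: A k.+1))%VS; rewrite E.
have Hm : forall k, iter k T v \in A k by elim=> [|k IH] //=; apply: memv_img.
have Hi : forall k w, w \in A k -> exists u, u \in V /\ w = iter k T u.
  elim=> [|k IH] w /=; first by move=> wV; exists w.
  case/memv_imgP => w' /IH [u [uV ->]] ->; by exists u.
have := Hm nn; rewrite (stab_dec Hd Hs nn) => /Hi [u [uV ->]].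
by exists u; rewrite iterD.
Qed.

Lemma ker_stab (T : 'End(g)) v j : iter (nn + j)%N T v = 0 -> iter nn T v = 0.
Proof.
pose A k := iter k (fun U => T @^-1: U)%VS 0%VS.
have Hm : forall k w, (w \in A k) = (iter k T w == 0).
  elim=> [|k IH] w /=; first by rewrite memv0.
  by rewrite -memv_preim IH -iterSr.
have Hd : forall k, (A k <= A k.+1)%VS.
  move=> k; apply/subvP => w; rewrite !Hm /= => /eqP ->; by rewrite linear0.
have Hs : forall k, A k = A k.+1 -> A k.+1 = A k.+2.
  by move=> k E; change ((T @^-1: A k) = (T @^-1: A k.+1))%VS; rewrite E.
move=> /eqP; rewrite -Hm -(stab_inc Hd Hs j) Hm; exact/eqP.
Qed.

End Stab.


Section Fit.
Variables (F : fieldType) (g : vectType F) (br : g -> g -> g).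
Hypothesis Hbr : lie_bracket br.
Variable h : {vspace g}.
Hypothesis Hnil : lie_nilpotent br h.
Local Notation nn := (\dim (fullv : {vspace g})).+1.
Local Notation B := (brsp br h fullv).

Lemma iter_adl c k v : iter k (adl br c) v = iter k (br c) v.
Proof. by elim: k => //= k ->; rewrite adlE. Qed.

Definition kerv c := iter nn (fun U => (adl br c @^-1: U)%VS) 0%VS.

Lemma mem_kerv c v : (v \in kerv c) = (iter nn (br c) v == 0).
Proof.
rewrite /kerv -iter_adl; move: v; elim: nn => [|k IH] w /=; first by rewrite memv0.
by rewrite -memv_preim IH -iterSr.
Qed.

Lemma stable_ker c y v : c \in h -> y \in h -> iter nn (br c) v = 0 ->
  iter nn (br c) (br y v) = 0.
Proof.
move=> ch yh Hv; have [m Hm] := nil_iter Hbr Hnil.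
have := br_deriv Hbr (erefl (nn + m)%N) (Hm c y ch yh) Hv.
rewrite -!iter_adl; exact: ker_stab.
Qed.

Lemma fit_step c (V : {vspace g}) : c \in h ->
  (forall y v, y \in h -> v \in V -> br y v \in V) ->
  forall v, v \in V -> exists v1, [/\ v1 \in V, iter nn (br c) v1 = 0 & v - v1 \in B].
Proof.
move=> ch HV v vV.
have HT : (adl br c @: V <= V)%VS.
  by apply/subvP => w /memv_imgP [u uV ->]; rewrite (adlE Hbr); apply: HV.
have [u [uV Hu]] := fitting HT vV; rewrite !iter_adl in Hu.
have HI : forall k, iter k (br c) u \in V by elim=> //= k IH; apply: HV.
exists (v - iter nn (br c) u); split.
- by rewrite memvB.
- by rewrite (iter_add Hbr) (iter_opp Hbr) Hu subrr.
- have -> : v - (v - iter nn (br c) u) = iter nn (br c) u by rewrite opprB addrC subrK.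
  by rewrite iterS; apply: br_brsp => //; apply: memvf.
Qed.

Lemma fit_iter (L : seq g) : (forall c, c \in L -> c \in h) ->
  forall V : {vspace g}, (forall y v, y \in h -> v \in V -> br y v \in V) ->
  exists N : {vspace g}, [/\ (N <= V)%VS,
    (forall y v, y \in h -> v \in N -> br y v \in N),
    (forall c, c \in L -> forall v, v \in N -> iter nn (br c) v = 0) &
    (forall v, v \in V -> exists2 u, u \in N & v - u \in B)].
Proof.
elim: L => [|c L IH] HL V HV.
  exists V; split; [exact: subvv | exact: HV | by [] | ].
  by move=> v vV; exists v => //; rewrite subrr mem0v.
have ch : c \in h by apply: HL; rewrite inE eqxx.
have HV' : forall y v, y \in h -> v \in (V :&: kerv c)%VS -> br y v \in (V :&: kerv c)%VS.
  move=> y v yh; rewrite !memv_cap !mem_kerv => /andP [vV /eqP vk].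
  rewrite HV //=; apply/eqP; exact: stable_ker.
have [|N [NV HN HLN Hdec]] := IH _ _ HV'.
  by move=> c' c'L; apply: HL; rewrite inE c'L orbT.
exists N; split => //.
- by apply: subv_trans NV _; apply: capvSl.
- move=> c'; rewrite inE => /orP [/eqP -> v vN|c'L]; last exact: HLN.
  by have := subvP NV _ vN; rewrite memv_cap mem_kerv => /andP [_ /eqP].
- move=> v vV; have [v1 [v1V v1k Hv1]] := fit_step ch HV vV.
  have [|u uN Hu] := Hdec v1; first by rewrite memv_cap v1V mem_kerv v1k eqxx.
  exists u => //; have -> : v - u = (v - v1) + (v1 - u) by rewrite addrA subrK.
  exact: memvD.
Qed.

End Fit.


Section Engel.
Variables (F : fieldType) (g : vectType F) (br : g -> g -> g).
Hypothesis Hbr : lie_bracket br.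
Variable h : {vspace g}.
Hypothesis Hsub : lie_subalgebra br h.

Lemma engel_one c (P : g -> Prop) : (forall v, P v -> P (br c v)) ->
  forall d v, P v -> v \notin h -> iter d (br c) v \in h ->
  exists w, [/\ P w, w \notin h & br c w \in h].
Proof.
move=> Hs; elim=> [|d IH] v Pv vh; first by move=> /= vh'; rewrite vh' in vh.
case: (boolP (br c v \in h)) => [cvh _|cvh]; first by exists v.
rewrite iterSr => Hd; exact: (IH (br c v) (Hs _ Pv) cvh Hd).
Qed.

Lemma engel_list (cs : seq g) : forall (P : g -> Prop),
  (forall c, c \in cs -> c \in h) ->
  (forall c v, c \in cs -> P v -> P (br c v)) ->
  (forall c v, c \in cs -> P v -> exists d, iter d (br c) v \in h) ->
  (forall c c' v, c \in cs -> c' \in cs -> P v -> br c (br c' v) - br c' (br c v) \in h) ->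
  (exists v, P v /\ v \notin h) ->
  exists v, [/\ P v, v \notin h & forall c, c \in cs -> br c v \in h].
Proof.
elim: cs => [|c cs IH] P Hh Hs Hn Hc [v0 [Pv0 v0h]].
  by exists v0; split.
have cc : c \in c :: cs by rewrite inE eqxx.
have cs' : forall c', c' \in cs -> c' \in c :: cs by move=> c' H; rewrite inE H orbT.
have [d Hd] := Hn c v0 cc Pv0.
have [w [Pw wh cw]] := engel_one (fun v Pv => Hs c v cc Pv) Pv0 v0h Hd.
have [v [[Pv cv] vh Hv]] : exists v, [/\ (P v /\ br c v \in h), v \notin h &
    forall c', c' \in cs -> br c' v \in h].
  apply: (IH (fun v => P v /\ br c v \in h)).
- by move=> c' /cs'; apply: Hh.
- move=> c' v c'cs [Pv cv]; split; first exact: Hs (cs' _ c'cs) Pv.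
  rewrite -[br c (br c' v)](subrK (br c' (br c v))); apply: memvD.
    exact: Hc cc (cs' _ c'cs) Pv.
  by apply: Hsub => //; apply: Hh; apply: cs'.
- by move=> c' v c'cs [Pv _]; apply: Hn (cs' _ c'cs) Pv.
- by move=> c1 c2 v c1cs c2cs [Pv _]; apply: Hc (cs' _ c1cs) (cs' _ c2cs) Pv.
- by exists w.
exists v; split => // c'; rewrite inE => /orP [/eqP -> //|]; exact: Hv.
Qed.

End Engel.


Section Main.
Variables (F : fieldType) (g : vectType F) (br : g -> g -> g).
Hypothesis Hbr : lie_bracket br.
Variable h : {vspace g}.
Local Notation nn := (\dim (fullv : {vspace g})).+1.
Local Notation lcs := (lower_central_series br h).

Lemma sum_basis_h (U : {vspace g}) v :
  (forall c, c \in (vbasis U) -> br c v \in h) -> forall c, c \in U -> br c v \in h.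
Proof.
move=> H c cU; rewrite (coord_vbasis cU) (brsumL Hbr); apply: memv_suml => i _.
rewrite (brZl Hbr); apply: memvZ; apply: H; apply: mem_nth; by rewrite size_tuple.
Qed.

Hypothesis Hsub : lie_subalgebra br h.
Hypothesis Hnorm : forall x, (forall y, y \in h -> br x y \in h) -> x \in h.

Lemma no_N (N : {vspace g}) m : lcs m = 0%VS ->
  (forall y v, y \in h -> v \in N -> br y v \in N) ->
  (forall j c, (j < m)%N -> c \in vbasis (lcs j) -> forall v, v \in N -> iter nn (br c) v = 0) ->
  forall v, v \in N -> v \in h.
Proof.
move=> Hm HN HL v0 v0N; apply/negPn/negP => v0h.
have Q : forall k, (k <= m)%N -> exists v, [/\ v \in N, v \notin h &
    forall c, c \in lcs (m - k)%N -> br c v \in h].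
  elim=> [|k IH] km.
    exists v0; split => // c; rewrite subn0 Hm memv0 => /eqP ->.
    by rewrite (br0l Hbr) mem0v.
  have jm : (m - k.+1 < m)%N by lia.
  have Ej : (m - k)%N = (m - k.+1).+1 by lia.
  move: jm Ej; set j := (m - k.+1)%N => jm Ej.
  have [v [[vN _] vh Hv]] : exists v, [/\ (v \in N /\ forall c, c \in lcs j.+1 -> br c v \in h),
      v \notin h & forall c, c \in vbasis (lcs j) -> br c v \in h].
    apply: (engel_list Hsub).
    - by move=> c /vbasis_mem; apply: (subvP (lcs_sub Hsub j)).
    - move=> c v cL [vN Hv]; have ch : c \in h.
        by move: cL => /vbasis_mem; apply: (subvP (lcs_sub Hsub j)).
      split; first exact: HN.
      move=> c' c'l; rewrite (brJ Hbr); apply: memvD.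
        apply: Hv; rewrite (brC Hbr) memvN; apply: (subvP (lcs_dec Hbr Hsub j.+1)).
        exact: br_brsp.
      by apply: Hsub => //; apply: Hv.
    - by move=> c v cL [vN _]; exists nn; rewrite (HL j c jm cL v vN) mem0v.
    - move=> c c' v cL c'L [vN Hv].
      rewrite (brJ Hbr) addrK; apply: Hv; apply: br_brsp => //.
        by move: cL => /vbasis_mem; apply: (subvP (lcs_sub Hsub j)).
      exact: vbasis_mem.
    - have [v [vN vh Hv]] := IH (ltnW km); exists v; split => //.
      by split => // c; rewrite -Ej; apply: Hv.
  by exists v; split => //; apply: sum_basis_h.
have [v [vN vh Hv]] := Q m (leqnn m); rewrite subnn in Hv.
move: vh; rewrite Hnorm // => y yh; rewrite (brC Hbr) memvN; exact: Hv.
Qed.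

Hypothesis Hnil : lie_nilpotent br h.

Lemma hB_full : (h + brsp br h fullv)%VS = fullv.
Proof.
have [m Hm] := Hnil.
pose L := [seq c | j <- iota 0 m, c <- (vbasis (lcs j) : seq g)].
have HLh : forall c, c \in L -> c \in h.
  move=> c /allpairsPdep [j [c' [_ c'v ->]]].
  exact: (subvP (lcs_sub Hsub j)) _ (vbasis_mem c'v).
have [N [_ HN HLN Hdec]] := fit_iter Hbr Hnil HLh (V := fullv) (fun y v _ _ => memvf _).
apply/eqP; rewrite eqEsubv subvf /=; apply/subvP => v _.
have [u uN Hu] := Hdec v (memvf v).
rewrite -[v](subrK u) addrC; apply: memv_add => //.
apply: (no_N Hm HN _ uN) => j c jm cj w wN; apply: HLN => //.
by apply: (allpairs_f_dep (fun _ c => c) (x := j)) => //; rewrite mem_iota add0n jm.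
Qed.

End Main.


Section Tens.
Variables (F : fieldType) (g W : vectType F).

Lemma tensDl (w1 w2 : W) (x : g) : tens (w1 + w2) x = tens w1 x + tens w2 x.
Proof. by apply/matrixP => i j; rewrite !mxE linearD /= mulrDl. Qed.
Lemma tensZl a (w : W) (x : g) : tens (a *: w) x = a *: tens w x.
Proof. by apply/matrixP => i j; rewrite !mxE linearZ /= mulrA. Qed.
Lemma tensDr (w : W) (x1 x2 : g) : tens w (x1 + x2) = tens w x1 + tens w x2.
Proof. by apply/matrixP => i j; rewrite !mxE linearD /= mulrDr. Qed.
Lemma tensZr a (w : W) (x : g) : tens w (a *: x) = a *: tens w x.
Proof. by apply/matrixP => i j; rewrite !mxE linearZ /= mulrCA. Qed.
Lemma tens0l (x : g) : tens (0 : W) x = 0.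
Proof. by apply/matrixP => i j; rewrite !mxE linear0 mul0r. Qed.
Lemma tens0r (w : W) : tens w (0 : g) = 0.
Proof. by apply/matrixP => i j; rewrite !mxE linear0 mulr0. Qed.
Lemma tensNr (w : W) (x : g) : tens w (- x) = - tens w x.
Proof. by rewrite -scaleN1r tensZr scaleN1r. Qed.
Lemma tens_suml I (r : seq I) (P : pred I) (f : I -> W) (x : g) :
  tens (\sum_(i <- r | P i) f i) x = \sum_(i <- r | P i) tens (f i) x.
Proof. exact: (big_morph (fun w => tens w x) (fun a b => tensDl a b x) (tens0l x)). Qed.
Lemma tens_sumr I (r : seq I) (P : pred I) (f : I -> g) (w : W) :
  tens w (\sum_(i <- r | P i) f i) = \sum_(i <- r | P i) tens w (f i).
Proof. exact: (big_morph (fun x => tens w x) (fun a b => tensDr w a b) (tens0r w)). Qed.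

Variable br : g -> g -> g.
Hypothesis Hbr : lie_bracket br.
Variable rho : g -> 'End(W).

Lemma tens_actE xi (w : W) (eta : g) :
  tens_act br rho xi (tens w eta) = tens (rho xi w) eta + tens w (br xi eta).
Proof.
have Ew := coord_vbasis (memvf w); have Ee := coord_vbasis (memvf eta).
set cw := fun i => coord (vbasis fullv) i w in Ew *.
set ce := fun j => coord (vbasis fullv) j eta in Ee *.
have E1 : tens (rho xi w) eta = \sum_i \sum_j (cw i * ce j) *:
    tens (rho xi (vbasis fullv)`_i) (vbasis fullv)`_j.
  rewrite {1}Ew linear_sum tens_suml; apply: eq_bigr => i _.
  rewrite linearZ tensZl {1}Ee tens_sumr scaler_sumr; apply: eq_bigr => j _.
  by rewrite tensZr scalerA.
have E2 : tens w (br xi eta) = \sum_i \sum_j (cw i * ce j) *: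
    tens (vbasis fullv)`_i (br xi (vbasis fullv)`_j).
  rewrite {1}Ew tens_suml; apply: eq_bigr => i _.
  rewrite tensZl {1}Ee (brsumR Hbr) tens_sumr scaler_sumr; apply: eq_bigr => j _.
  by rewrite (brZr Hbr) tensZr scalerA.
rewrite E1 E2 /tens_act -big_split; apply: eq_bigr => i _.
rewrite -big_split; apply: eq_bigr => j _.
by rewrite !mxE scalerDr !(tnth_nth 0).
Qed.

End Tens.


Section Final.
Variables (F : fieldType) (g W : vectType F).

Definition tensr (w : W) : g -> 'M[F]_(\dim {:W}%VS, \dim {:g}%VS) := tens w.
Lemma tensr_lin w : linear (tensr w).
Proof. by move=> a x y; rewrite /tensr tensDr tensZr. Qed.
HB.instance Definition _ w := GRing.isLinear.Build F g _ *:%R (tensr w) (tensr_lin w).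

Lemma tens_basis (i : 'I_(\dim {:W}%VS)) (j : 'I_(\dim {:g}%VS)) :
  tens (vbasis {:W}%VS)`_i (vbasis {:g}%VS)`_j = delta_mx i j.
Proof.
apply/matrixP => k l; rewrite !mxE !coord_free ?(basis_free (vbasisP _)) //.
rewrite (eq_sym k) (eq_sym l); case: (i == k); case: (j == l);
  by rewrite /= ?mulr1 ?mulr0.
Qed.

Lemma main_gen (br : g -> g -> g) (h : {vspace g}) (rho : g -> 'End(W)) :
  lie_bracket br -> cartan_subalgebra br h ->
  generates_module (tens_act br rho)
    (fun m => exists (w : W) (eta : g), eta \in h /\ m = tens w eta).
Proof.
move=> Hbr [Hsub Hnil Hnorm] U HS Hact.
have Hf := hB_full Hbr Hsub Hnorm Hnil.
have H1 : forall w eta xi, eta \in h -> tens w (br xi eta) \in U.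
  move=> w eta xi eh.
  have -> : tens w (br xi eta) = tens_act br rho xi (tens w eta) - tens (rho xi w) eta.
    by rewrite (tens_actE Hbr) addrC addKr.
  apply: memvB; first by apply: Hact; apply: HS; exists w, eta.
  by apply: HS; exists (rho xi w), eta.
have H2 : forall w v, tens w v \in U.
  move=> w v; pose Uw := (linfun (tensr w) @^-1: U)%VS.
  have HUw : forall x, (x \in Uw) = (tens w x \in U).
    by move=> x; rewrite -memv_preim lfunE.
  have : (h + brsp br h fullv <= Uw)%VS.
    rewrite subv_add; apply/andP; split.
      by apply/subvP => x xh; rewrite HUw; apply: HS; exists w, x.
    apply/span_subvP => x /allpairsP [[u y] [/= uh _ ->]].
    rewrite HUw (brC Hbr) tensNr memvN; apply: H1; exact: vbasis_mem.
  by rewrite Hf => /subvP /(_ v (memvf v)); rewrite HUw.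
apply/vspaceP => M; rewrite memvf (matrix_sum_delta M).
apply: memv_suml => i _; apply: memv_suml => j _; apply: memvZ.
by rewrite -tens_basis.
Qed.

End Final.


Theorem lemma3p8 (R : realType) (g : vectType R[i]) (br : g -> g -> g)
    (h : {vspace g}) (W : vectType R[i]) (rho : g -> 'End(W)) :
  lie_bracket br -> lie_semisimple br -> cartan_subalgebra br h ->
  lie_rep br rho ->
  generates_module (tens_act br rho)
    (fun m => exists (w : W) (eta : g), eta \in h /\ m = tens w eta).
Proof.
move=> Hbr _ Hc _; exact: main_gen Hbr Hc.
Qed.
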